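(* Let $c_1 = \frac{\sqrt5-1}{2}$. Let $g$ be a fixed real polynomial with $g(c_1)g(-c_1)>0$ and let $h > 0$. Then there exists $n_0$ (depending only on $g$ and $h$) such that for every integer polynomial $f$ all of whose coefficients are at most $h$ in absolute value, and every $n \geq n_0$, the polynomial $P_n(x) = f(x)x^n + g(x)$ satisfies $P_n(c_1)P_n(-c_1) > 0$. *)

(* Defs.v *)
From HB Require Import structures.
From mathcomp Require Import all_boot all_order all_algebra.
From mathcomp Require Import reals.
Set Implicit Arguments. Unset Strict Implicit. Unset Printing Implicit Defensive.
Import Order.TTheory GRing.Theory Num.Theory.
Local Open Scope ring_scope.

Definition c1 (R : realType) : R := (Num.sqrt 5 - 1) / 2.

Definition Pn (R : realType) (f : {poly int}) (g : {poly R}) (n : nat) : {poly R} :=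
  map_poly (intmul 1) f * 'X^n + g.

(* Main.v *)
Require Import Defs.
From HB Require Import structures.
From mathcomp Require Import all_boot all_order all_algebra.
From mathcomp Require Import reals.
From mathcomp Require Import ring lra.
Import Order.TTheory GRing.Theory Num.Theory.
Local Open Scope ring_scope.

Section Aux.
Variable R : realType.

Lemma c1_facts : 0 < c1 R /\ c1 R < 1 /\ c1 R ^+ 2 <= 1/2.
Proof.
rewrite /c1.
have s2 : 2 <= Num.sqrt (5 : R).
  have -> : (2 : R) = Num.sqrt 4.
    by rewrite (_ : (4:R) = 2 ^+ 2) ?sqrtr_sqr ?ger0_norm // expr2; lra.
  by rewrite ler_sqrt //; lra.
have s3 : Num.sqrt (5 : R) < 3.
  have -> : (3 : R) = Num.sqrt 9.
    by rewrite (_ : (9:R) = 3 ^+ 2) ?sqrtr_sqr ?ger0_norm // expr2; lra.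
  by rewrite ltr_sqrt //; lra.
have sq : Num.sqrt (5 : R) ^+ 2 = 5 by rewrite sqr_sqrtr //; lra.
set s := Num.sqrt (5 : R) in s2 s3 sq *.
split; first lra.
split; first lra.
have -> : ((s - 1) / 2) ^+ 2 = (s ^+ 2 - 2 * s + 1) / 4 by field.
rewrite sq; lra.
Qed.

Lemma geom_bound (c : R) (N : nat) : 0 <= c -> c < 1 ->
  \sum_(i < N) c ^+ i <= (1 - c)^-1.
Proof.
move=> c0 c1'.
have hc : 0 < 1 - c by lra.
elim: N => [|N IH]; first by rewrite big_ord0 invr_ge0 ltW.
rewrite big_ord_recl expr0.
under eq_bigr => i _ do rewrite /bump /= exprS.
rewrite -mulr_sumr.
have H := ler_wpM2l c0 IH.
have -> : (1 - c)^-1 = 1 + c * (1 - c)^-1 by field; lra.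
by rewrite lerD2l.
Qed.

End Aux.
Lemma poly_bound (R : realType) (f : {poly int}) (h c x : R) :
  (forall i : nat, `|(f`_i)%:~R| <= h) -> `|x| <= c -> 0 <= c -> c < 1 ->
  `|(map_poly (intmul 1) f).[x]| <= h * (1 - c)^-1.
Proof.
move=> hf hx c0 c1'.
have h0 : 0 <= h by apply: le_trans (hf 0%N); exact: normr_ge0.
rewrite horner_coef size_map_inj_poly //; last exact: intr_inj.
apply: (le_trans (ler_norm_sum _ _ _)).
apply: (le_trans _ (ler_wpM2l h0 (@geom_bound R c (size f) c0 c1'))).
rewrite mulr_sumr; apply: ler_sum => i _.
rewrite coef_map /= normrM normrX.
apply: ler_pM => //; first exact: exprn_ge0.
by apply: lerXn2r => //; rewrite nnegrE.
Qed.

Lemma sign_keep (R : realType) (a u : R) : `|u| < `|a| -> 0 < (a + u) * a.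
Proof.
move=> hu.
have ha : 0 <= `|u| by exact: normr_ge0.
have h1 : - (u * a) <= `|u * a| by rewrite -normrN ler_norm.
have h2 : `|u * a| < `|a| * `|a|.
  by rewrite normrM ltr_pM2r // (le_lt_trans ha hu).
have h3 : `|a| * `|a| = a * a by rewrite -normrM ger0_norm // -expr2 sqr_ge0.
rewrite mulrDl; lra.
Qed.

Theorem lemma3p3 (R : realType) (g : {poly R}) (h : R) :
  0 < g.[c1 R] * g.[- c1 R] -> 0 < h ->
  exists n0 : nat, forall (f : {poly int}) (n : nat),
    (forall i : nat, `|(f`_i)%:~R| <= h) -> (n0 <= n)%N ->
    0 < (Pn f g n).[c1 R] * (Pn f g n).[- c1 R].
Proof.
move=> hab hh.
have [cpos [clt1 c2]] := c1_facts R.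
set c := c1 R in cpos clt1 c2 *.
set a := g.[c] in hab *; set b := g.[- c] in hab *.
have a0 : a != 0 by apply: contraTneq hab => ->; rewrite mul0r ltxx.
have b0 : b != 0 by apply: contraTneq hab => ->; rewrite mulr0 ltxx.
set M := h * (1 - c)^-1.
have M0 : 0 <= M by rewrite mulr_ge0 ?ltW // invr_gt0; lra.
pose eps : R := Num.min `|a| `|b|.
have eps0 : 0 < eps by rewrite lt_min !normr_gt0 a0 b0.
set k := Num.Def.archi_bound (M / eps).
exists (2 * k)%N => f n hf hn.
have hcn : c ^+ n <= (2 ^+ k)^-1.
  apply: (le_trans (y := c ^+ (2 * k))).
    by rewrite ler_wiXn2l // ?ltW.
  rewrite exprM -exprVn.
apply: lerXn2r.
  - by rewrite nnegrE exprn_ge0 // ltW.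
  - by rewrite nnegrE invr_ge0.
  - by rewrite -div1r.
have hk : M / eps < 2 ^+ k by exact: (@upper_nthrootP _ _ k (leqnn k)).
have Mc : M * c ^+ n < eps.
  apply: (le_lt_trans (ler_wpM2l M0 hcn)).
  have p2 : 0 < (2:R) ^+ k by rewrite exprn_gt0.
  rewrite ltr_pdivrMr // mulrC -ltr_pdivrMr //.
have key : forall x, `|x| = c -> `|(map_poly (intmul 1) f).[x] * x ^+ n| < eps.
  move=> x hx; rewrite normrM normrX hx.
  apply: le_lt_trans Mc; apply: ler_wpM2r; first by rewrite exprn_ge0 // ltW.
  have := @poly_bound R f h c x hf; rewrite hx lexx ltW // clt1; apply => //.
have ka := key c (gtr0_norm cpos).
have kb := key (- c) ltac:(by rewrite normrN gtr0_norm).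
rewrite /Pn !hornerE -/a -/b.
set u := _ * c ^+ n in ka *.
set v := _ * (- c) ^+ n in kb *.
have X : 0 < (u + a) * a by rewrite addrC sign_keep // (lt_le_trans ka) // ge_min lexx.
have Y : 0 < (v + b) * b by rewrite addrC sign_keep // (lt_le_trans kb) // ge_min lexx orbT.
have : 0 < ((u + a) * (v + b)) * (a * b).
  have E : ((u + a) * (v + b)) * (a * b) = ((u + a) * a) * ((v + b) * b) by ring.
  by rewrite E mulr_gt0.
by rewrite pmulr_lgt0.
Qed.
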